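(* Let $(X,d_X)$ and $(\Lambda,d_\Lambda)$ be complete metric spaces and, for each $\lambda\in\Lambda$, let $S_\lambda(\cdot,\cdot)$ be a process on $X$. Assume that for every $s\in\mathbb R$ and $t\ge s$ the map $\lambda\mapsto S_\lambda(t,s)x$ is continuous, uniformly for $x$ in compact subsets of $X$. Let $K\subseteq X$ be compact. Then for any $s\in\mathbb R$ and $t\ge s$ the map $(\lambda,B)\mapsto S_\lambda(t,s)B$ is jointly continuous on $\Lambda\times CB(K)$, where the images are equipped with the Hausdorff distance $\Delta_X$.
   Context: A process on $X$ is a family of maps $S(t,s):X\to X$, $s\in\mathbb R$, $t\ge s$, with $S(t,t)=\mathrm{id}$, $S(t,\tau)S(\tau,s)=S(t,s)$ for $t\ge\tau\ge s$, and $S(t,s)x$ continuous in $(x,t,s)$. $\rho_X(A,C)=\sup_{a\in A}\inf_{c\in C}d_X(a,c)$, $\Delta_X(A,C)=\max(\rho_X(A,C),\rho_X(C,A))$. $CB(K)$ is the set of nonempty closed (hence compact) subsets of $K$ with metric $\Delta_X$. *)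

(* Defs.v *)
From HB Require Import structures.
From mathcomp Require Import all_boot all_order all_algebra.
From mathcomp Require Import all_classical all_reals all_analysis.
Set Implicit Arguments. Unset Strict Implicit. Unset Printing Implicit Defensive.
Import Order.TTheory GRing.Theory Num.Theory.
Import numFieldTopology.Exports numFieldNormedType.Exports.
Local Open Scope classical_set_scope.
Local Open Scope ring_scope.

Definition complete_metric {R : realType} (T : metricType R) : Prop :=
  forall F : set_system T, ProperFilter F -> cauchy F -> exists x : T, F --> x.

(* A process on X: S t s x stands for S(t,s)x (only t >= s is meaningful). *)
Definition is_process {R : realType} {X : metricType R}
  (S : R -> R -> X -> X) : Prop :=
  [/\ (forall t x, S t t x = x),
      (forall t tau s x, s <= tau -> tau <= t -> S t tau (S tau s x) = S t s x) &
      {within [set p : X * R * R | p.2 <= p.1.2],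
         continuous (fun p : X * R * R => S p.1.2 p.2 p.1.1)}].

Definition hrho {R : realType} {X : metricType R} (A C : set X) : R :=
  sup [set inf [set mdist a c | c in C] | a in A].

Definition hdist {R : realType} {X : metricType R} (A C : set X) : R :=
  Num.max (hrho A C) (hrho C A).

Definition CB {R : realType} {X : metricType R} (K : set X) : set (set X) :=
  [set B | [/\ B `<=` K, B !=set0 & closed B]].

(* Main.v *)
Require Import Defs.
From HB Require Import structures.
From mathcomp Require Import all_boot all_order all_algebra.
From mathcomp Require Import all_classical all_reals all_analysis.
Import Order.TTheory GRing.Theory Num.Theory.
Import numFieldTopology.Exports numFieldNormedType.Exports.
Local Open Scope classical_set_scope.
Local Open Scope ring_scope.
From mathcomp Require Import lra.
Lemma slice_cont (R : realType) (X : metricType R) (S : R -> R -> X -> X)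
  (s t : R) : is_process S -> s <= t -> forall x (e : R), 0 < e ->
  exists2 r : R, 0 < r & forall y, mdist x y < r -> mdist (S t s x) (S t s y) < e.
Proof.
case=> _ _ Hc st x e e0.
move: Hc => /subspace_continuousP Hc.
have := Hc (x, t, s) st.
move=> /metricType_numDomainType.cvgrPdist_lt /(_ e e0) Hn.
have hc : (fun y : X => (y, t, s)) @ x --> (x, t, s).
  exact: (cvg_pair (cvg_pair cvg_id (cvg_cst t)) (cvg_cst s)).
have := hc _ Hn.
move=> /metricType_numDomainType.nbhs_mdistP [r /= r0 Hr].
exists r => // y xy.
exact: (Hr y xy st).
Qed.

Lemma unif_cont (R : realType) (X Y : metricType R) (f : X -> Y) (K : set X) :
  compact K ->
  (forall x (e : R), 0 < e -> exists2 r : R, 0 < r &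
     forall y, mdist x y < r -> mdist (f x) (f y) < e) ->
  forall e : R, 0 < e -> exists2 d : R, 0 < d &
    forall x y, K x -> K y -> mdist x y < d -> mdist (f x) (f y) < e.
Proof.
move=> cK fc e e0.
have nc := (near_covering_withinP K).2 ((compact_near_coveringP K).1 cK).
have := nc R (0:R)^'+ (fun d x => forall y, K y -> mdist x y < d ->
   mdist (f x) (f y) < e) _.
case.
- move=> x Kx.
  have e20 : 0 < e / 2 by rewrite divr_gt0.
  have [r r0 Hr] := fc x _ e20.
  have r20 : 0 < r / 2 by rewrite divr_gt0.
  near=> x' d => Kx' y Ky hy.
  have h1 : mdist x x' < r / 2.
    near: x'; apply/metricType_numDomainType.nbhs_mdistP; exists (r/2) => //.
  have h2 : d < r / 2 by near: d; exact: nbhs_right_lt.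
  have hxy : mdist x y < r.
    rewrite (le_lt_trans (metric_triangle x x' y))//.
    by rewrite [r]splitr ltrD// (lt_trans hy).
  rewrite (le_lt_trans (metric_triangle _ (f x) _))// [e]splitr ltrD//.
    rewrite metric_sym; apply: Hr => /=.
    by rewrite (lt_trans h1)// ltr_pdivrMr// ltr_pMr// ltr1n.
  exact: Hr.
- move=> r /= r0 Hr; exists (r / 2); first by rewrite divr_gt0.
  move=> x y Kx Ky; apply: (Hr (r / 2)) => //; last by rewrite divr_gt0.
  rewrite /ball_ /= sub0r normrN gtr0_norm ?divr_gt0//.
  by rewrite ltr_pdivrMr// ltr_pMr// ltr1n.
Unshelve. all: by end_near.
Qed.
Lemma compact_bnd (R : realType) (X : metricType R) (K : set X) :
  compact K -> forall c : X, exists M : R, forall x, K x -> mdist c x <= M.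
Proof.
move=> cK c.
have nc := (near_covering_withinP K).2 ((compact_near_coveringP K).1 cK).
have := nc R (pinfty_nbhs R) (fun M x => mdist c x <= M) _.
case.
- move=> x Kx.
  near=> x' M => /= Kx'.
  have h1 : mdist x x' < 1.
    near: x'; apply/metricType_numDomainType.nbhs_mdistP; exists 1 => //=.
  have h2 : mdist c x + 1 <= M.
    near: M; apply: nbhs_pinfty_ge; exact: num_real.
  by rewrite (le_trans (metric_triangle c x x'))// (le_trans _ h2)// lerD2l ltW.
- move=> M [_ HM]; exists (M + 1) => x Kx; apply: (HM (M + 1)) => //.
  by rewrite ltrDl.
Unshelve. all: by end_near.
Qed.

Lemma inf_dist_le (R : realType) (X : metricType R) (a c : X) (C : set X) :
  C c -> inf [set mdist a c' | c' in C] <= mdist a c.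
Proof.
move=> Cc; apply: ge_inf; last by exists c.
by exists 0 => _ [c' _ <-]; exact: mdist_ge0.
Qed.

Arguments inf_dist_le {R X} a {c C}.

Lemma hrho_le (R : realType) (X : metricType R) (A C : set X) (M : R) :
  A !=set0 -> (forall a, A a -> exists2 c, C c & mdist a c <= M) ->
  hrho A C <= M.
Proof.
move=> [a0 Aa0] H; rewrite /hrho; apply: ge_sup.
  by exists (inf [set mdist a0 c | c in C]); exists a0.
move=> _ [a Aa <-]; have [c Cc hc] := H a Aa.
exact: le_trans (inf_dist_le a Cc) hc.
Qed.

Lemma hrho_lt (R : realType) (X : metricType R) (A C : set X) (M d : R) :
  C !=set0 -> (forall a c, A a -> C c -> mdist a c <= M) -> hrho A C < d ->
  forall a, A a -> exists2 c, C c & mdist a c < d.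
Proof.
move=> [c0 Cc0] bnd hd a Aa.
have hle : inf [set mdist a c | c in C] <= hrho A C.
  apply: ub_le_sup; last by exists a.
  exists M => _ [a' Aa' <-].
  exact: le_trans (inf_dist_le a' Cc0) (bnd _ _ Aa' Cc0).
have [_ [c Cc <-] hc] := @inf_lt _ [set mdist a c | c in C] d
  (ex_intro _ _ (ex_intro2 _ _ c0 Cc0 erefl)) (le_lt_trans hle hd).
by exists c.
Qed.

Theorem lemma3p2 (R : realType) (X Lam : metricType R)
  (S : Lam -> R -> R -> X -> X) :
  complete_metric X -> complete_metric Lam ->
  (forall lam, is_process (S lam)) ->
  (forall (s t : R), s <= t -> forall C : set X, compact C ->
     forall lam0 : Lam, forall eps : R, 0 < eps ->
       exists2 delta : R, 0 < delta &
         forall lam : Lam, mdist lam0 lam < delta ->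
           forall x, C x -> mdist (S lam0 t s x) (S lam t s x) < eps) ->
  forall K : set X, compact K ->
  forall (s t : R), s <= t ->
  forall (lam0 : Lam) (B0 : set X), CB K B0 ->
  forall eps : R, 0 < eps ->
    exists2 delta : R, 0 < delta &
      forall (lam : Lam) (B : set X), CB K B ->
        mdist lam0 lam < delta -> hdist B0 B < delta ->
        hdist (S lam0 t s @` B0) (S lam t s @` B) < eps.
Proof.
move=> _ _ Hproc Hlam K cK s t st lam0 B0 [B0K B00 _] eps eps0.
have e30 : 0 < eps / 3 by rewrite divr_gt0.
have [d1 d10 Hd1] := @unif_cont _ _ _ _ K cK (@slice_cont _ _ (S lam0) s t (Hproc lam0) st) _ e30.
have [d2 d20 Hd2] := Hlam s t st K cK lam0 _ e30.
have [c0 Kc0] : exists c0, K c0 by case: B00 => c0 /B0K; exists c0.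
have [M HM] := @compact_bnd _ _ K cK c0.
have bnd : forall a c, K a -> K c -> mdist a c <= M + M.
  move=> a c Ka Kc; rewrite (le_trans (metric_triangle a c0 c))//.
  by rewrite lerD// ?HM// metric_sym HM.
exists (Num.min d1 d2); first by rewrite lt_min d10 d20.
move=> lam B [BK B0' _] hl hB.
move: hl; rewrite lt_min => /andP[_ hl2].
move: hB; rewrite /hdist gt_max => /andP[h1 h2].
have key : eps / 3 + eps / 3 < eps by lra.
rewrite gt_max; apply/andP; split; apply: (le_lt_trans _ key).
- apply: hrho_le.
    by case: B00 => b0 Bb0; exists (S lam0 t s b0); exists b0.
  move=> _ [b0 Bb0 <-].
  have [b Bb hb] := @hrho_lt _ _ B0 B (M + M) _ B0'
    (fun a c Aa Cc => bnd a c (B0K a Aa) (BK c Cc)) h1 b0 Bb0.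
  move: hb; rewrite lt_min => /andP[hb _].
  exists (S lam t s b); first by exists b.
  rewrite (le_trans (metric_triangle _ (S lam0 t s b) _))// ltW// ltrD//.
    exact: Hd1 (B0K _ Bb0) (BK _ Bb) hb.
  exact: Hd2 hl2 b (BK _ Bb).
- apply: hrho_le.
    by case: B0' => b Bb; exists (S lam t s b); exists b.
  move=> _ [b Bb <-].
  have [b0 Bb0 hb] := @hrho_lt _ _ B B0 (M + M) _ B00
    (fun a c Aa Cc => bnd a c (BK a Aa) (B0K c Cc)) h2 b Bb.
  move: hb; rewrite lt_min => /andP[hb _].
  exists (S lam0 t s b0); first by exists b0.
  rewrite (le_trans (metric_triangle _ (S lam0 t s b) _))// ltW// ltrD//.
    by rewrite metric_sym; exact: Hd2 hl2 b (BK _ Bb).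
  exact: Hd1 (BK _ Bb) (B0K _ Bb0) hb.
Qed.
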